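(* Let $L$ be an integral lattice containing no vectors of norm one (i.e. no $v$ with $v\cdot v=1$). If $v\in L$ is contained in an obtuse superbase for $L$, then $v\cdot v\le\mathrm{disc}(L)$.
   Context: An integral lattice is a finitely generated free abelian group with a symmetric positive definite integral bilinear form; $\mathrm{disc}(L)$ is the determinant of its Gram matrix. An obtuse superbase of a rank-$k$ lattice $L$ is a set $\{v_0,\dots,v_k\}\subseteq L$ spanning $L$ with $v_i\cdot v_j\le0$ for $i\ne j$ and $v_0+\dots+v_k=0$. *)

(* Defs.v *)
(* An integral lattice of rank k is modelled (up to isometry)
   as Z^k (row vectors 'rV[int]_k) with a Gram matrix G : 'M[int]_k w.r.t.
   the standard basis; the form is u.v = u G v^T. *)
From mathcomp Require Import all_boot all_order all_algebra.
Set Implicit Arguments. Unset Strict Implicit. Unset Printing Implicit Defensive.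
Import Order.TTheory GRing.Theory Num.Theory.
Local Open Scope ring_scope.

Definition bform (k : nat) (G : 'M[int]_k) (u v : 'rV[int]_k) : int :=
  (u *m G *m v^T) 0 0.

Definition integral_lattice (k : nat) (G : 'M[int]_k) : Prop :=
  G^T = G /\ forall x : 'rV[int]_k, x != 0 -> 0 < bform G x x.

Definition disc (k : nat) (G : 'M[int]_k) : int := \det G.

Definition spans (k m : nat) (vs : 'I_m -> 'rV[int]_k) : Prop :=
  forall x : 'rV[int]_k, exists c : 'I_m -> int, x = \sum_(i < m) c i *: vs i.

Definition obtuse_superbase (k : nat) (G : 'M[int]_k)
    (vs : 'I_k.+1 -> 'rV[int]_k) : Prop :=
  [/\ spans vs,
      (forall i j : 'I_k.+1, i != j -> bform G (vs i) (vs j) <= 0)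
    & \sum_(i < k.+1) vs i = 0].

Definition no_norm_one (k : nat) (G : 'M[int]_k) : Prop :=
  forall x : 'rV[int]_k, bform G x x != 1.

(* Main.v *)
Require Import Defs.
From mathcomp Require Import all_boot all_order all_algebra.
From mathcomp Require Import zify ring lra.
Import Order.TTheory GRing.Theory Num.Theory.
Local Open Scope ring_scope.

Lemma bformE k (M : 'M[int]_k) x y :
  bform M x y = \sum_i \sum_l x 0 i * M i l * y 0 l.
Proof.
rewrite /bform !mxE exchange_big /=; apply: eq_bigr => l _.
rewrite mxE mulr_suml; apply: eq_bigr => i _; rewrite !mxE //.
Qed.

Lemma det_split n (M : 'M[int]_n.+1) j a :
  \det M = \det (M - a *: delta_mx j j) + a * \det (row' j (col' j M)).
Proof.
rewrite (expand_det_row M j) (expand_det_row (M - a *: delta_mx j j) j).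
have Ec : forall l, cofactor (M - a *: delta_mx j j) j l = cofactor M j l.
  move=> l; rewrite /cofactor; congr (_ * \det _).
  apply/matrixP => p q; rewrite !mxE eq_sym (negbTE (neq_lift j p)) /=.
  by rewrite mulr0 subr0.
under [X in _ = X + _]eq_bigr => l _ do rewrite Ec !mxE.
rewrite (bigD1 j) //= [in RHS](bigD1 j) //= eqxx mulr1.
under [X in _ = _ + X + _]eq_bigr => l Hl do rewrite (negbTE Hl) andbF mulr0 subr0.
rewrite /cofactor -signr_odd addnn odd_double expr0 mul1r; ring.
Qed.

Lemma sum_lift n (F : 'I_n.+1 -> int) j :
  \sum_l F l = F j + \sum_(b < n) F (lift j b).
Proof. by rewrite (bigD1_ord j). Qed.

Lemma det0 n (M : 'M[int]_n.+1) : (forall i, \sum_l M i l = 0) -> \det M = 0.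
Proof.
move=> H.
pose u : 'cV[int]_n.+1 := const_mx 1.
have Mu : M *m u = 0.
  apply/matrixP => i l; rewrite !mxE; under eq_bigr do rewrite mxE mulr1; exact: H.
have := congr1 (fun A => (A *m u) 0 0) (mul_adj_mx M).
rewrite /= -mulmxA Mu mulmx0 mul_scalar_mx !mxE mulr1 => <-; done.
Qed.
Arguments det0 {n}.

Lemma delta_rowsum n (j i : 'I_n) : \sum_l (delta_mx j j : 'M[int]_n) i l = (i == j)%:R.
Proof.
rewrite (bigD1 j) //= big1 ?addr0; first by rewrite mxE eqxx andbT.
by move=> l Hl; rewrite mxE (negbTE Hl) andbF.
Qed.

Lemma sub_offdiag n (M : 'M[int]_n.+1) j :
  (forall i l, i != l -> M i l <= 0) ->
  forall a b, a != b -> row' j (col' j M) a b <= 0.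
Proof. by move=> H a b ab; rewrite !mxE; apply: H; rewrite (inj_eq (@lift_inj _ j)). Qed.
Arguments sub_offdiag {n}.

Lemma sub_rowsum n (M : 'M[int]_n.+1) j :
  (forall i l, i != l -> M i l <= 0) ->
  (forall i, 0 <= \sum_l M i l) ->
  forall a, 0 <= \sum_b row' j (col' j M) a b.
Proof.
move=> H1 H2 a; have := H2 (lift j a); rewrite (sum_lift _ _ j).
have : M (lift j a) j <= 0 by apply: H1; rewrite eq_sym; apply: neq_lift.
move=> ? ?; under eq_bigr do rewrite !mxE.
change (0 <= \sum_(i < n) M (lift j a) (lift j i)).
lia.
Qed.
Arguments sub_rowsum {n}.

Lemma dd k (M : 'M[int]_k) : (forall i l, i != l -> M i l <= 0) ->
  (forall i, 0 <= \sum_l M i l) -> 0 <= \det M.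
Proof.
elim: k M => [|n IH] M H1 H2; first by rewrite det_mx00.
suff: forall m (M : 'M[int]_n.+1), (absz (\sum_i \sum_l M i l)%R <= m)%N ->
  (forall i l, i != l -> M i l <= 0) ->
  (forall i, 0 <= \sum_l M i l) -> 0 <= \det M by move/(_ _ M (leqnn _)); apply.
clear M H1 H2.
elim=> [|m IHm] M Hm H1 H2.
  rewrite det0 // => i; have : \sum_i \sum_l M i l = 0 by lia.
  move=> /eqP; rewrite psumr_eq0; last by move=> *; apply: H2.
  by move=> /allP /(_ i (mem_index_enum _)) /eqP; apply.
case: (pickP (fun i => 0 < \sum_l M i l)) => [j Hj | H0]; last first.
  rewrite det0 // => i; have := H0 i; have := H2 i; move=> /= ? /negbT; lia.
rewrite (det_split _ M j 1) mul1r; apply: addr_ge0.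
  have E : forall i, \sum_l (M - 1 *: delta_mx j j) i l = \sum_l M i l - (i == j)%:R.
    move=> i; rewrite -(delta_rowsum _ j i) -sumrB; apply: eq_bigr => l _.
    by rewrite !mxE mul1r.
  apply: IHm.
  - have Es : \sum_i \sum_l (M - 1 *: delta_mx j j) i l = \sum_i \sum_l M i l - 1.
      under eq_bigr do rewrite E.
      rewrite sumrB; congr (_ - _).
      rewrite (bigD1 j) //= big1 ?eqxx ?addr0 //.
      by move=> i Hi; rewrite (negbTE Hi).
    rewrite Es.
    have : 0 <= \sum_i \sum_l M i l - \sum_l M j l.
      rewrite (bigD1 j) //= addrC addrK; apply: sumr_ge0 => i _; exact: H2.
    lia.
  - move=> i l il; rewrite !mxE; have := H1 _ _ il; case: (_ && _) => /=; lia.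
  - move=> i; rewrite E; have := H2 i; case: eqP => [->|_]; lia.
apply: IH; [exact: sub_offdiag | exact: sub_rowsum].
Qed.
Arguments dd {k}.

Definition ext n (j : 'I_n.+1) (x : 'rV[int]_n) : 'rV[int]_n.+1 :=
  \row_i (if unlift j i is Some a then x 0 a else 0).
Arguments ext {n}.

Lemma ext0 n j (x : 'rV[int]_n) : ext j x 0 j = 0.
Proof. by rewrite mxE unlift_none. Qed.
Arguments ext0 {n}.

Lemma ext1 n j (x : 'rV[int]_n) a : ext j x 0 (lift j a) = x 0 a.
Proof. by rewrite mxE liftK. Qed.
Arguments ext1 {n}.

Lemma bform_ext n (M : 'M[int]_n.+1) j x :
  bform M (ext j x) (ext j x) = bform (row' j (col' j M)) x x.
Proof.
rewrite !bformE (sum_lift _ _ j) ext0 big1 ?add0r; last by move=> l _; rewrite !mul0r.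
apply: eq_bigr => a _; rewrite (sum_lift _ _ j) ext0 mulr0 add0r.
by apply: eq_bigr => b _; rewrite !ext1 !mxE.
Qed.
Arguments bform_ext {n}.

Lemma ext_neq0 n j (x : 'rV[int]_n) : x != 0 -> ext j x != 0.
Proof.
apply: contraNN => /eqP H; apply/eqP/rowP => a.
by have := congr1 (fun v : 'rV[int]_n.+1 => v 0 (lift j a)) H; rewrite /= ext1 !mxE.
Qed.
Arguments ext_neq0 {n}.

Lemma bform_ones n (M : 'M[int]_n) :
  bform M (const_mx 1) (const_mx 1) = \sum_i \sum_l M i l.
Proof.
rewrite bformE; apply: eq_bigr => i _; apply: eq_bigr => l _.
by rewrite !mxE mul1r mulr1.
Qed.
Arguments bform_ones {n}.

Lemma ones0 n (S : 'M[int]_n) : (const_mx 1 : 'rV[int]_n) == 0 -> \det S = 1 /\ \sum_i \sum_l S i l = 0.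
Proof.
case: n S => [|n] S H; first by rewrite det_mx00 big_ord0.
by have := congr1 (fun v : 'rV[int]_n.+1 => v 0 ord0) (eqP H); rewrite /= !mxE.
Qed.
Arguments ones0 {n}.

Lemma bform_delta n (M : 'M[int]_n) j : bform M (delta_mx 0 j) (delta_mx 0 j) = M j j.
Proof. by rewrite /bform trmx_delta -rowE -colE !mxE. Qed.
Arguments bform_delta {n}.

Lemma Esum n (M : 'M[int]_n) j a i :
  \sum_l (M - a *: delta_mx j j) i l = \sum_l M i l - a * (i == j)%:R.
Proof.
rewrite -(delta_rowsum _ j i) mulr_sumr -sumrB; apply: eq_bigr => l _.
by rewrite !mxE.
Qed.
Arguments Esum {n}.

Lemma mainM k (M : 'M[int]_k) :
  (forall i l, M i l = M l i) -> (forall i l, i != l -> M i l <= 0) ->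
  (forall i, 0 <= \sum_l M i l) ->
  (forall x, x != 0 -> 0 < bform M x x) -> (forall x, bform M x x != 1) ->
  \sum_i \sum_l M i l <= \det M.
Proof.
elim: k M => [|n IH] M H0 H1 H2 H3 H4; first by rewrite det_mx00 big_ord0.
have HR : 0 < \sum_i \sum_l M i l.
  rewrite -bform_ones; apply: H3; apply/eqP => /rowP /(_ ord0); rewrite !mxE.
  by move/eqP; rewrite oner_eq0.
case: (pickP (fun i => 0 < \sum_l M i l)) => [j Hj | Hn]; last first.
  have : \sum_i \sum_l M i l <= 0.
    rewrite -oppr_ge0 -sumrN; apply: sumr_ge0 => i _; rewrite oppr_ge0.
    by have := Hn i => /= /negbT; rewrite -leNgt.
  lia.
set S := row' j (col' j M).
have HdetS : (\sum_l M j l) * \det S <= \det M.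
  rewrite (det_split _ M j (\sum_l M j l)) /S lerDr; apply: dd.
  - move=> i l il; rewrite !mxE.
    have -> : ((i == j) && (l == j)) = false.
      by apply/negP => /andP [/eqP ei /eqP el]; move: il; rewrite ei el eqxx.
    by rewrite mulr0 subr0; apply: H1.
  - move=> i; rewrite Esum; have := H2 i; case: eqP => [->|_]; lia.
have HS0 : forall a b, S a b = S b a by move=> a b; rewrite !mxE.
have HS3 : forall x, x != 0 -> 0 < bform S x x.
  by move=> x /(ext_neq0 j) /H3; rewrite bform_ext.
have HS4 : forall x, bform S x x != 1 by move=> x; rewrite -bform_ext.
have IHS := IH S HS0 (sub_offdiag M j H1) (sub_rowsum M j H1 H2) HS3 HS4.
set T := \sum_i \sum_l S i l in IHS.
set D := \det S in IHS HdetS.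
have Hr : \sum_i \sum_l M i l = \sum_l M j l + \sum_a \sum_l M (lift j a) l.
  exact: sum_lift.
have Hr2 : \sum_a \sum_l M (lift j a) l = \sum_a M (lift j a) j + T.
  rewrite /T -big_split; apply: eq_bigr => a _ /=; rewrite (sum_lift _ _ j).
  by congr (_ + _); apply: eq_bigr => b _; rewrite !mxE.
have Hrj : \sum_l M j l = M j j + \sum_a M (lift j a) j.
  rewrite (sum_lift _ _ j); congr (_ + _); apply: eq_bigr => b _; exact: H0.
have Hd : \sum_a M (lift j a) j <= 0.
  rewrite -oppr_ge0 -sumrN; apply: sumr_ge0 => a _; rewrite oppr_ge0.
  by apply: H1; rewrite eq_sym neq_lift.
have Hrest : 0 <= \sum_a \sum_l M (lift j a) l.
  by apply: sumr_ge0 => a _; apply: H2.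
have Hjj : 2 <= M j j.
  have := H3 (delta_mx 0 j); have := H4 (delta_mx 0 j); rewrite !bform_delta.
  have -> : (delta_mx 0 j : 'rV[int]_n.+1) != 0.
    apply/eqP => /matrixP /(_ 0 j); rewrite !mxE !eqxx /=.
    by move/eqP; rewrite oner_eq0.
  move=> ? /(_ isT); lia.
have HT : (D = 1 /\ T = 0) \/ 2 <= T.
  case: (boolP ((const_mx 1 : 'rV[int]_n) == 0)) => Ho.
    by left; have [] := ones0 S Ho.
  right; have := HS3 _ Ho; have := HS4 (const_mx 1); rewrite bform_ones -/T; lia.
move: HdetS Hr Hr2 Hrj Hd Hrest Hjj Hj HR IHS HT.
move: (\sum_i \sum_l M i l) (\sum_l M j l) (\sum_a M (lift j a) j) (\sum_a \sum_l M (lift j a) l) (M j j) (\det M) T D.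
move=> R r d q mjj dM T' D' ? ? ? ? ? ? ? ? ? ? HT.
case: HT => [[HD1 HT0]|HT2]; nia.
Qed.

Lemma bform_sym k (G : 'M[int]_k) u w : G^T = G -> bform G u w = bform G w u.
Proof.
move=> HG; rewrite !bformE exchange_big; apply: eq_bigr => i _; apply: eq_bigr => l _.
have -> : G l i = G i l by rewrite -{1}HG mxE.
by rewrite mulrC mulrA -!mulrA (mulrC (u 0 l)).
Qed.

Lemma bform_sumr k (G : 'M[int]_k) u n (f : 'I_n -> 'rV[int]_k) :
  \sum_b bform G u (f b) = bform G u (\sum_b f b).
Proof.
under eq_bigr do rewrite bformE.
rewrite bformE exchange_big; apply: eq_bigr => i _.
rewrite exchange_big; apply: eq_bigr => l _.
by rewrite summxE mulr_sumr.
Qed.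

Lemma bformNN k (G : 'M[int]_k) w : bform G (- w) (- w) = bform G w w.
Proof.
rewrite !bformE; apply: eq_bigr => i _; apply: eq_bigr => l _.
by rewrite !mxE mulNr mulrNN.
Qed.

Lemma bform_mul k (G : 'M[int]_k) (P : 'M[int]_k) x y :
  bform (P *m G *m P^T) x y = bform G (x *m P) (y *m P).
Proof. by rewrite /bform trmx_mul !mulmxA. Qed.

Lemma entry_rows k (A B : 'M[int]_k) a b : (A *m B^T) a b = (row a A *m (row b B)^T) 0 0.
Proof. by rewrite !mxE; apply: eq_bigr => l _; rewrite !mxE. Qed.

Theorem lemma2p10 (k : nat) (G : 'M[int]_k) (v : 'rV[int]_k) :
  integral_lattice G -> no_norm_one G ->
  (exists vs : 'I_k.+1 -> 'rV[int]_k, obtuse_superbase G vs /\ exists i, vs i = v) ->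
  bform G v v <= disc G.
Proof.
move=> [HGs HGp] Hn1 [vs [[Hsp Hob Hsum] [i0 <-]]].
have Hv0 : vs i0 = - \sum_a vs (lift i0 a).
  by move: Hsum; rewrite (bigD1_ord i0) //= => /eqP; rewrite addr_eq0 => /eqP.
pose P : 'M[int]_k := \matrix_a vs (lift i0 a).
have rowP' : forall a, row a P = vs (lift i0 a) by move=> a; rewrite rowK.
pose M := P *m G *m P^T.
have HM : forall a b, M a b = bform G (vs (lift i0 a)) (vs (lift i0 b)).
  by move=> a b; rewrite /M entry_rows row_mul !rowP'.
have [c Hc] := fin_all_exists (fun m : 'I_k => Hsp (delta_mx 0 m)).
pose C : 'M[int]_k := \matrix_(m, a) (c m (lift i0 a) - c m i0).
have CP : C *m P = 1%:M.
  apply/row_matrixP => m; rewrite row_mul row1 Hc mulmx_sum_row (bigD1_ord i0) //= Hv0.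
  rewrite scalerN scaler_sumr -sumrN -big_split; apply: eq_bigr => a _ /=.
  by rewrite rowP' !mxE scalerBl addrC.
have PC := mulmx1C CP.
have HxP : forall x : 'rV[int]_k, x != 0 -> x *m P != 0.
  move=> x; apply: contraNN => /eqP H; apply/eqP.
  by rewrite -[x]mulmx1 -PC mulmxA H mul0mx.
have Hmain := @mainM k M.
have Hsumv : bform G (vs i0) (vs i0) = \sum_i \sum_l M i l.
  rewrite -bform_ones /M bform_mul Hv0 bformNN mulmx_sum_row.
  congr bform; apply: eq_bigr => a _; by rewrite rowP' mxE scale1r.
rewrite Hsumv /disc.
have -> : \det G = \det M.
  rewrite /M !det_mulmx det_tr.
  have := congr1 determinant CP; rewrite det_mulmx det1 => H.
  have := intUnitRing.unitzPl H => U.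
  have E : \det P * \det P = 1 by move: U; rewrite qualifE => /orP [] /eqP ->.
  by rewrite mulrC mulrA E mul1r.
apply: Hmain.
- by move=> a b; rewrite !HM bform_sym.
- by move=> a b ab; rewrite HM; apply: Hob; rewrite (inj_eq (@lift_inj _ i0)).
- move=> a; under eq_bigr do rewrite HM.
  rewrite bform_sumr.
  have -> : \sum_b vs (lift i0 b) = - vs i0 by rewrite Hv0 opprK.
  have : bform G (vs (lift i0 a)) (vs i0) <= 0 by apply: Hob; rewrite eq_sym neq_lift.
  by rewrite /bform !linearN /= [X in _ -> 0 <= X]mxE oppr_ge0.
- by move=> x /HxP H; rewrite /M bform_mul; apply: HGp.
- by move=> x; rewrite /M bform_mul.
Qed.
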